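(* Let $N\ge 1$, $M>N$, let $k_1<k_2<\dots<k_M$ be real numbers (generic), let $\theta_{01},\dots,\theta_{0M}$ be real constants and set $\theta_m=k_mx+k_m^2y+k_m^3t+\theta_{0m}$. Let $A=(a_{nm})$ be a real $N\times M$ matrix of rank $N$ all of whose nonzero $N\times N$ minors are positive, and let $$\tau(x,y,t)=\sum_{1\le m_1<\dots<m_N\le M} A(m_1,\dots,m_N)\,\exp[\theta(m_1,\dots,m_N)]\prod_{1\le s<r\le N}(k_{m_r}-k_{m_s}),$$ where $A(m_1,\dots,m_N)$ is the minor of $A$ on columns $m_1,\dots,m_N$ and $\theta(m_1,\dots,m_N)=\theta_{m_1}+\dots+\theta_{m_N}$. Let $u=2(\log\tau)_{xx}$. Fix $t$. Then, as $y\to\pm\infty$: (i) The dominant phase combinations of $\tau$ (the exponential terms of $\tau$ that dominate all others) in adjacent regions of the $xy$-plane have $N-1$ phases in common and differ by a single phase; the transition between two such dominant combinations $\theta(i,m_2,\dots,m_N)$ and $\theta(j,m_2,\dots,m_N)$ occurs along the line $L_{ij}:\theta_i=\theta_j$. (ii) Along such a transition line $L_{ij}$, $\tau(x,y,t)\sim C_i e^{\theta(i,m_2,\dots,m_N)}+C_j e^{\theta(j,m_2,\dots,m_N)}$, where the constants $C_i,C_j$ depend on $k_i,k_j,k_{m_2},\dots,k_{m_N}$ and on the minors $A(i,m_2,\dots,m_N)$, $A(j,m_2,\dots,m_N)$; consequently, in a neighborhood of $L_{ij}$, $$u(x,y,t)\sim \tfrac12(k_i-k_j)^2\,\mathrm{sech}^2\big[\tfrac12(\theta_i-\theta_j)\big],$$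 a traveling wave (asymptotic line soliton) with amplitude $|k_i-k_j|$ and direction $k_i+k_j$ (the slope of the normal to $L_{ij}$), which satisfies the dispersion relation $-4\omega l_x+l_x^4+3l_y^2=0$ with $l_x=k_i-k_j$, $l_y=k_i^2-k_j^2$, $\omega=k_i^3-k_j^3$.
   Context: This concerns the KPII equation $(-4u_t+u_{xxx}+6uu_x)_x+3u_{yy}=0$, solutions of which are given by $u=2(\log\tau)_{xx}$ with $\tau$ the Wronskian of $f_n=\sum_{m=1}^M a_{nm}e^{\theta_m}$, $n=1,\dots,N$; the displayed sum is the expansion of this Wronskian. Under the stated positivity assumptions $\tau>0$ everywhere and $u$ is a nonsingular solution. An asymptotic line soliton arising from the single-phase transition $i\to j$ is labeled by the index pair $[i,j]$. *)

(* Defs.v *)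
From HB Require Import structures.
From mathcomp Require Import all_boot all_order all_algebra.
From mathcomp Require Import all_classical all_reals all_analysis.
Set Implicit Arguments. Unset Strict Implicit. Unset Printing Implicit Defensive.
Import Order.TTheory GRing.Theory Num.Theory.
Local Open Scope classical_set_scope.
Local Open Scope ring_scope.

Section KP.
Variables (R : realType) (N M : nat).

Definition incr (f : {ffun 'I_N -> 'I_M}) : bool :=
  [forall n1 : 'I_N, forall n2 : 'I_N, (n1 < n2)%N ==> (f n1 < f n2)%N].

Definition minor (A : 'M[R]_(N, M)) (f : {ffun 'I_N -> 'I_M}) : R :=
  \det (colsub f A).

Definition vand (k : 'I_M -> R) (f : {ffun 'I_N -> 'I_M}) : R :=
  \prod_(r < N) \prod_(s < N | (s < r)%N) (k (f r) - k (f s)).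

Definition phase (k th0 : 'I_M -> R) (m : 'I_M) (x y t : R) : R :=
  k m * x + k m ^+ 2 * y + k m ^+ 3 * t + th0 m.

Definition Theta (k th0 : 'I_M -> R) (f : {ffun 'I_N -> 'I_M}) (x y t : R) : R :=
  \sum_(n < N) phase k th0 (f n) x y t.

Definition term (k th0 : 'I_M -> R) (A : 'M[R]_(N, M))
    (f : {ffun 'I_N -> 'I_M}) (x y t : R) : R :=
  minor A f * expR (Theta k th0 f x y t) * vand k f.

Definition tau (k th0 : 'I_M -> R) (A : 'M[R]_(N, M)) (x y t : R) : R :=
  \sum_(f : {ffun 'I_N -> 'I_M} | incr f) term k th0 A f x y t.

Definition u (k th0 : 'I_M -> R) (A : 'M[R]_(N, M)) (x y t : R) : R :=
  2 * derive1 (derive1 (fun x' => ln (tau k th0 A x' y t))) x.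

Definition phases (f : {ffun 'I_N -> 'I_M}) : {set 'I_M} := [set f n | n : 'I_N].

(* Dominant phase combination in the asymptotic region x = c*y, y -> sg*oo
   (sg = 1 : y -> +oo, sg = -1 : y -> -oo): the term of f dominates every
   other exponential term of tau there. *)
Definition dominant (k th0 : 'I_M -> R) (A : 'M[R]_(N, M)) (t sg c : R)
    (f : {ffun 'I_N -> 'I_M}) : Prop :=
  [/\ incr f, minor A f != 0 &
    forall g : {ffun 'I_N -> 'I_M}, incr g -> g != f ->
      (term k th0 A g (c * (sg * r)) (sg * r) t /
       term k th0 A f (c * (sg * r)) (sg * r) t) @[r --> +oo] --> 0].

End KP.

Definition generic (R : realType) (M : nat) (k : 'I_M -> R) : Prop :=
  forall i j p q : 'I_M, i != j -> p != q -> k i + k j = k p + k q ->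
    (i == p) && (j == q) || (i == q) && (j == p).

Definition sech (R : realType) (z : R) : R := 2 / (expR z + expR (- z)).

(* Main.v *)
Require Import Defs.
From HB Require Import structures.
From mathcomp Require Import all_boot all_order all_algebra.
From mathcomp Require Import all_classical all_reals all_analysis.
From mathcomp Require Import ring lra.
Import numFieldNormedType.Exports.
Import Order.TTheory GRing.Theory Num.Theory.
Local Open Scope classical_set_scope.
Local Open Scope ring_scope.
Set Implicit Arguments. Unset Strict Implicit. Unset Printing Implicit Defensive.
Section Sort.
Variables (N M : nat).
Implicit Types (f g : {ffun 'I_N -> 'I_M}) (S : {set 'I_M}).

Definition ltI := (fun x y : 'I_M => (x < y)%N).

Lemma ltI_trans : transitive ltI.
Proof. by move=> x y z; rewrite /ltI; apply: ltn_trans. Qed.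
Lemma ltI_irr : irreflexive ltI.
Proof. by move=> x; rewrite /ltI ltnn. Qed.

Lemma enum_sorted S : sorted ltI (enum S).
Proof.
have: sorted ltn (map val (enum S)).
  rewrite -[enum _](eq_filter (mem_enum _)).
  rewrite -(eq_filter (mem_map val_inj _)) -filter_map.
  by rewrite (sorted_filter ltn_trans) // unlock val_ord_enum iota_ltn_sorted.
by rewrite sorted_map.
Qed.

Lemma ord_enum_sorted : sorted (fun x y : 'I_N => (x < y)%N) (enum 'I_N).
Proof.
have: sorted ltn (map val (enum 'I_N)).
  by rewrite enumT unlock val_ord_enum iota_ltn_sorted.
by rewrite sorted_map.
Qed.

Lemma incr_inj f : incr f -> injective f.
Proof.
move=> /forallP H n1 n2 e.
case: (ltngtP n1 n2) => [h|h|/val_inj //].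
- by have := implyP (forallP (H n1) n2) h; rewrite e ltnn.
- by have := implyP (forallP (H n2) n1) h; rewrite e ltnn.
Qed.

Lemma incr_map_sorted f : incr f -> sorted ltI (map f (enum 'I_N)).
Proof.
move=> /forallP H; rewrite sorted_map.
apply: (sub_sorted _ ord_enum_sorted) => x y /= xy.
exact: (implyP (forallP (H x) y) xy).
Qed.

Lemma incr_enum f : incr f -> map f (enum 'I_N) = enum (phases f).
Proof.
move=> fi; apply: (irr_sorted_eq ltI_trans ltI_irr).
- exact: incr_map_sorted.
- exact: enum_sorted.
move=> x; rewrite mem_enum /phases.
apply/mapP/imsetP => [[n _ ->]|[n _ ->]]; exists n => //.
by rewrite mem_enum.
Qed.

Lemma incr_phases_inj f g : incr f -> incr g -> phases f = phases g -> f = g.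
Proof.
move=> fi gi e; apply/ffunP => n.
have := congr1 (fun s => nth (f n) s n) (incr_enum fi).
have := congr1 (fun s => nth (f n) s n) (incr_enum gi).
rewrite e => <-.
have nN : (n < size (enum 'I_N))%N by rewrite size_enum_ord.
by rewrite !(nth_map n) -?enumT ?size_enum_ord // ?nth_ord_enum.
Qed.

End Sort.
Section Sort2.
Variables (N M : nat).
Implicit Types (f g : {ffun 'I_N -> 'I_M}) (S : {set 'I_M}).

Definition sortf (x0 : 'I_M) S : {ffun 'I_N -> 'I_M} := [ffun n : 'I_N => nth x0 (enum S) (val n)].

Lemma sortf_incr x0 S : #|S| = N -> incr (sortf x0 S).
Proof.
move=> cS; apply/forallP => n1; apply/forallP => n2; apply/implyP => lt12.
rewrite !ffunE.
have := @sorted_ltn_nth _ (@ltI M) (@ltI_trans M) x0 (enum S) (enum_sorted S).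
by apply => //; rewrite ?inE -?cardE ?cS ?ltn_ord.
Qed.

Lemma sortf_phases x0 S : #|S| = N -> phases (sortf x0 S) = S.
Proof.
move=> cS; apply/setP => x; rewrite /phases.
apply/imsetP/idP => [[n _ ->]|xS].
  by rewrite ffunE -mem_enum mem_nth // -cardE cS ltn_ord.
have : x \in enum S by rewrite mem_enum.
move=> /(nthP x0) [i ilt e].
have iN : (i < N)%N by rewrite -cS cardE.
by exists (Ordinal iN) => //; rewrite ffunE.
Qed.
End Sort2.
Section LA.
Variables (R : realType) (N M : nat) (A : 'M[R]_(N, M)).

Definition vc (m : 'I_M) : 'rV[R]_N := \row_j A j m.
Definition Mx (h : 'I_N -> 'I_M) : 'M[R]_N := \matrix_(n, j) A j (h n).

Lemma row_Mx h n : row n (Mx h) = vc (h n).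
Proof. by apply/rowP => j; rewrite !mxE. Qed.

Lemma minorE (f : {ffun 'I_N -> 'I_M}) : minor A f = \det (Mx f).
Proof.
rewrite /minor -det_tr; congr (\det _); apply/matrixP => i j.
by rewrite !mxE.
Qed.

Definition phi (B : 'M[R]_N) p (u : 'rV[R]_N) := \sum_j u 0 j * cofactor B p j.
Definition rep (B : 'M[R]_N) p (u : 'rV[R]_N) : 'M[R]_N :=
  \matrix_(i, j) if i == p then u 0 j else B i j.

Lemma det_rep B p u : \det (rep B p u) = phi B p u.
Proof.
rewrite (expand_det_row _ p) /phi; apply: eq_bigr => j _.
rewrite !mxE eqxx; congr (_ * _).
rewrite /cofactor; congr (_ * \det _); apply/matrixP => i k.
by rewrite !mxE eq_sym (negbTE (neq_lift p i)).
Qed.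

Lemma phi_row B p q : phi B p (row q B) = if q == p then \det B else 0.
Proof.
rewrite -det_rep; case: eqP => [->|/eqP qp].
  by congr (\det _); apply/matrixP => i j; rewrite !mxE; case: eqP => // ->.
apply: (@determinant_alternate _ _ _ p q); first by rewrite eq_sym.
by move=> j; rewrite !mxE eqxx (negbTE qp).
Qed.

Lemma phi_lin B p (c : 'I_N -> R) (w : 'I_N -> 'rV[R]_N) :
  phi B p (\sum_n c n *: w n) = \sum_n c n * phi B p (w n).
Proof.
rewrite /phi.
under eq_bigr do rewrite summxE big_distrl.
rewrite exchange_big; apply: eq_bigr => n _ /=.
rewrite big_distrr; apply: eq_bigr => j _ /=.
by rewrite mxE mulrA.
Qed.

Lemma span_unit B (u : 'rV[R]_N) : \det B != 0 ->
  u = \sum_n (u *m invmx B) 0 n *: row n B.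
Proof.
move=> dB; rewrite -mulmx_sum_row mulmxKV //.
by rewrite unitmxE unitfE.
Qed.

Lemma Mx_rep h p x : Mx (fun n => if n == p then x else h n) = rep (Mx h) p (vc x).
Proof. by apply/matrixP => i j; rewrite !mxE; case: eqP. Qed.

Lemma exch1 (f g : 'I_N -> 'I_M) p :
  \det (Mx f) != 0 -> \det (Mx g) != 0 -> (forall n, g n != f p) ->
  exists m, (forall q, g m != f q) /\
            \det (Mx (fun n => if n == p then g m else f n)) != 0.
Proof.
move=> df dg gp.
case: (pselect (exists m, (forall q, g m != f q) /\
            \det (Mx (fun n => if n == p then g m else f n)) != 0)) => // nex.
exfalso.
have H0 m : phi (Mx f) p (vc (g m)) = 0.
  case: (pselect (forall q, g m != f q)) => [gq|].
    apply/eqP; rewrite -det_rep -Mx_rep; apply: contraT => dne.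
    by exfalso; apply: nex; exists m.
  move=> /boolp.existsNP [q /negP]; rewrite negbK => /eqP gmq.
  rewrite gmq -row_Mx phi_row; case: eqP => // qp.
  by have := gp m; rewrite gmq qp eqxx.
have := phi_row (Mx f) p p; rewrite eqxx.
rewrite row_Mx (span_unit (vc (f p)) dg) phi_lin.
under eq_bigr do rewrite row_Mx H0 mulr0.
rewrite big1 // => /esym/eqP; by rewrite (negbTE df).
Qed.

Lemma exch2 (f g : 'I_N -> 'I_M) p :
  \det (Mx f) != 0 -> \det (Mx g) != 0 -> (forall n, g n != f p) ->
  exists m, (forall q, g m != f q) /\
            \det (Mx (fun n => if n == m then f p else g n)) != 0.
Proof.
move=> df dg gp.
case: (pselect (exists m, (forall q, g m != f q) /\
            \det (Mx (fun n => if n == m then f p else g n)) != 0)) => // nex.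
exfalso.
set c := vc (f p) *m invmx (Mx g).
have ev := span_unit (vc (f p)) dg.
have cm m : \det (Mx (fun n => if n == m then f p else g n)) = c 0 m * \det (Mx g).
  rewrite Mx_rep det_rep {1}ev phi_lin (bigD1 m) //= phi_row eqxx big1 ?addr0 //.
  by move=> n /negbTE nm; rewrite phi_row nm mulr0.
have H0 m : c 0 m * phi (Mx f) p (vc (g m)) = 0.
  case: (pselect (forall q, g m != f q)) => [gq|].
    have : c 0 m * \det (Mx g) = 0.
      rewrite -cm; apply/eqP; apply: contraT => dne.
      by exfalso; apply: nex; exists m.
    by move=> /eqP; rewrite mulf_eq0 (negbTE dg) orbF => /eqP ->; rewrite mul0r.
  move=> /boolp.existsNP [q /negP]; rewrite negbK => /eqP gmq.
  rewrite gmq -row_Mx phi_row; case: eqP => [qp|]; last by rewrite mulr0.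
  by have := gp m; rewrite gmq qp eqxx.
have := phi_row (Mx f) p p; rewrite eqxx.
rewrite row_Mx ev phi_lin.
under eq_bigr do rewrite row_Mx H0.
rewrite big1 // => /esym/eqP; by rewrite (negbTE df).
Qed.

End LA.
Definition img N M (h : 'I_N -> 'I_M) := [set h n | n : 'I_N]%SET.

Section Img.
Variables (N M : nat).

Lemma img_repl (h : 'I_N -> 'I_M) p z : injective h -> z \notin img h ->
  injective (fun n => if n == p then z else h n) /\
  img (fun n => if n == p then z else h n) = z |: (img h :\ h p).
Proof.
move=> hi zn; split.
  move=> n1 n2 /=.
  case: eqP => [->|_]; case: eqP => [->|_] // e.
  - by case/negP: zn; rewrite e; apply/imsetP; exists n2.
  - by case/negP: zn; rewrite -e; apply/imsetP; exists n1.
  - exact: hi.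
apply/setP => x; rewrite !inE.
apply/imsetP/idP => [[n _ ->]|].
  case: ifP => [_|/negbT np]; first by rewrite eqxx.
  rewrite (inj_eq hi) np /=; apply/orP; right; apply/imsetP; by exists n.
move=> /orP [/eqP ->|/andP [xp /imsetP [n _ xe]]].
  by exists p; rewrite ?eqxx.
exists n => //; case: (eqVneq n p) => // np.
by move: xp; rewrite xe np eqxx.
Qed.

Lemma card_img (h : 'I_N -> 'I_M) : injective h -> #|img h| = N.
Proof. by move=> hi; rewrite card_imset // card_ord. Qed.

Lemma incr_card (f : {ffun 'I_N -> 'I_M}) : incr f -> #|phases f| = N.
Proof. by move=> fi; apply: card_img; apply: incr_inj. Qed.
End Img.

Section Bases.
Variables (R : realType) (N M : nat) (A : 'M[R]_(N, M)).

Lemma det_rank (B : 'M[R]_N) : (\det B != 0) = (\rank B == N).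
Proof. by rewrite -unitfE -unitmxE -row_free_unit. Qed.

Lemma Mx_sub (h h' : 'I_N -> 'I_M) : (forall n, exists q, h n = h' q) ->
  (Mx A h <= Mx A h')%MS.
Proof.
move=> H; apply/row_subP => n; rewrite row_Mx; have [q ->] := H n.
rewrite -row_Mx; exact: row_sub.
Qed.

Lemma sort_basis (x0 : 'I_M) (h : 'I_N -> 'I_M) : injective h ->
  \det (Mx A h) != 0 ->
  exists f : {ffun 'I_N -> 'I_M}, [/\ incr f, phases f = img h & minor A f != 0].
Proof.
move=> hi dh.
have cS := card_img hi.
exists (sortf N x0 (img h)); split.
- exact: sortf_incr.
- exact: sortf_phases.
rewrite minorE det_rank; rewrite det_rank in dh.
have e := sortf_phases x0 cS.
suff -> : \rank (Mx A (sortf N x0 (img h))) = \rank (Mx A h) by [].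
apply/eqP; rewrite eqn_leq; apply/andP; split; apply: mxrankS; apply: Mx_sub => n.
- have : sortf N x0 (img h) n \in phases (sortf N x0 (img h)) by apply/imsetP; exists n.
  rewrite e.
  by move=> /imsetP [q _ ->]; exists q.
- have : h n \in img h by apply/imsetP; exists n.
  rewrite -{1}e.
  by move=> /imsetP [q _ ->]; exists q.
Qed.

Definition isB (T : {set 'I_M}) :=
  exists f : {ffun 'I_N -> 'I_M}, [/\ incr f, phases f = T & minor A f != 0].

Lemma SE1 S1 S2 y : isB S1 -> isB S2 -> y \in S1 -> y \notin S2 ->
  exists z, [/\ z \in S2, z \notin S1 & isB (z |: (S1 :\ y))].
Proof.
move=> [f1 [i1 e1 d1]] [f2 [i2 e2 d2]] yS1 yS2.
move: yS1; rewrite -e1 => /imsetP [p _ ye]; subst y.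
rewrite minorE in d1; rewrite minorE in d2.
have gp : forall n, f2 n != f1 p.
  by move=> n; apply/eqP => en; move: yS2; rewrite -e2 -en; case/negP; apply/imsetP; exists n.
have [m [gm dm]] := exch1 d1 d2 gp.
have zn : f2 m \notin img f1.
  by apply/negP => /imsetP [q _ eq]; move: (gm q); rewrite eq eqxx.
have [hi himg] := img_repl p (incr_inj i1) zn.
have [f' [i' e' d']] := sort_basis (f1 p) hi dm.
exists (f2 m); split.
- by rewrite -e2; apply/imsetP; exists m.
- exact: zn.
by exists f'; split => //; rewrite e' himg.
Qed.

Lemma SE2 S1 S2 x : isB S1 -> isB S2 -> x \in S1 -> x \notin S2 ->
  exists z, [/\ z \in S2, z \notin S1 & isB (x |: (S2 :\ z))].
Proof.
move=> [f1 [i1 e1 d1]] [f2 [i2 e2 d2]] xS1 xS2.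
move: xS1; rewrite -e1 => /imsetP [p _ xe]; subst x.
rewrite minorE in d1; rewrite minorE in d2.
have gp : forall n, f2 n != f1 p.
  by move=> n; apply/eqP => en; move: xS2; rewrite -e2 -en; case/negP; apply/imsetP; exists n.
have [m [gm dm]] := exch2 d1 d2 gp.
have zn : f1 p \notin img f2.
  by apply/negP => /imsetP [q _ eq]; move: (gp q); rewrite eq eqxx.
have [hi himg] := img_repl m (incr_inj i2) zn.
have [f' [i' e' d']] := sort_basis (f1 p) hi dm.
exists (f2 m); split.
- by rewrite -e2; apply/imsetP; exists m.
- apply/negP => /imsetP [q _ eq]; move: (gm q); by rewrite eq eqxx.
by exists f'; split => //; rewrite e' himg -e2.
Qed.
End Bases.
Section Tie.
Variables (R : realType) (M : nat) (B : {set 'I_M} -> Prop) (w : 'I_M -> R).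
Hypothesis hSE1 : forall S1 S2 y, B S1 -> B S2 -> y \in S1 -> y \notin S2 ->
  exists z, [/\ z \in S2, z \notin S1 & B (z |: (S1 :\ y))].
Hypothesis hSE2 : forall S1 S2 x, B S1 -> B S2 -> x \in S1 -> x \notin S2 ->
  exists z, [/\ z \in S2, z \notin S1 & B (x |: (S2 :\ z))].
Hypothesis huniq : forall x y p q, x != y -> p != q -> w x = w y -> w p = w q ->
  (x == p) && (y == q) || (x == q) && (y == p).

Definition W (T : {set 'I_M}) := \sum_(m in T) w m.

Lemma W_exch (S : {set 'I_M}) (y z : 'I_M) : y \in S -> z \notin S -> W (z |: (S :\ y)) = W S - w y + w z.
Proof.
move=> yS zS; rewrite /W big_setU1 /=; last by rewrite !inE negb_and zS orbT.
by rewrite (big_setD1 y yS) /=; ring.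
Qed.

Lemma exmax (D : {set 'I_M}) d0 : d0 \in D ->
  exists2 x, x \in D & forall y, y \in D -> w y <= w x.
Proof. by move=> Dd0; case: (@arg_maxP _ _ _ d0 (mem D) w) => // x Dx H; exists x => // y /H. Qed.

Lemma exmin (D : {set 'I_M}) d0 : d0 \in D ->
  exists2 x, x \in D & forall y, y \in D -> w x <= w y.
Proof. by move=> Dd0; case: (@arg_minP _ _ _ d0 (mem D) w) => // x Dx H; exists x => // y /H. Qed.

Lemma tie S1 S2 : B S1 -> B S2 -> S1 != S2 -> W S1 = W S2 ->
  (forall T, B T -> W T <= W S1) ->
  exists p q, [/\ p \in S1, p \notin S2, q \in S2, q \notin S1 &
                  w p = w q /\ S1 :\ p = S2 :\ q].
Proof.
move=> B1 B2 neq eW Wmax.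
pose D := (S1 :\: S2) :|: (S2 :\: S1).
have [d0 Dd0] : exists d, d \in D.
  apply/set0Pn; apply: contra neq => /eqP D0; apply/eqP/setP => x.
  have := congr1 (fun S : {set 'I_M} => x \in S) D0; rewrite !inE.
  by case: (x \in S1); case: (x \in S2).
have [x Dx xmax] := exmax Dd0.
have [y Dy ymin] := exmin Dd0.
have inD1 (d : 'I_M) : d \in S1 -> d \notin S2 -> d \in D by move=> *; rewrite !inE; apply/orP; left; apply/andP.
have inD2 (d : 'I_M) : d \in S2 -> d \notin S1 -> d \in D by move=> *; rewrite !inE; apply/orP; right; apply/andP.
have [p1 [q1 [p1S1 p1S2 q1S2 q1S1 [wp1 wq1]]]] : exists p1 q1,
    [/\ p1 \in S1, p1 \notin S2, q1 \in S2, q1 \notin S1 & w p1 = w x /\ w q1 = w x].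
  move: Dx; rewrite !inE => /orP [/andP [xS2 xS1]|/andP [xS1 xS2]].
  - have [z [zS2 zS1 Bz]] := hSE2 B1 B2 xS1 xS2.
    have := Wmax _ Bz; rewrite W_exch // -eW => le.
    have := xmax z (inD2 _ zS2 zS1) => le2.
    exists x, z; split => //; split => //; lra.
  - have [z [zS1 zS2 Bz]] := hSE2 B2 B1 xS2 xS1.
    have := Wmax _ Bz; rewrite W_exch // => le.
    have := xmax z (inD1 _ zS1 zS2) => le2.
    exists z, x; split => //; split => //; lra.
have [p2 [q2 [p2S1 p2S2 q2S2 q2S1 [wp2 wq2]]]] : exists p2 q2,
    [/\ p2 \in S1, p2 \notin S2, q2 \in S2, q2 \notin S1 & w p2 = w y /\ w q2 = w y].
  move: Dy; rewrite !inE => /orP [/andP [yS2 yS1]|/andP [yS1 yS2]].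
  - have [z [zS2 zS1 Bz]] := hSE1 B1 B2 yS1 yS2.
    have := Wmax _ Bz; rewrite W_exch // => le.
    have := ymin z (inD2 _ zS2 zS1) => le2.
    exists y, z; split => //; split => //; lra.
  - have [z [zS1 zS2 Bz]] := hSE1 B2 B1 yS2 yS1.
    have := Wmax _ Bz; rewrite W_exch // -eW => le.
    have := ymin z (inD1 _ zS1 zS2) => le2.
    exists z, y; split => //; split => //; lra.
have neqS (a b : 'I_M) : a \in S1 -> b \notin S1 -> a != b.
  by move=> aS bS; apply: contraNneq bS => <-.
have := huniq (neqS _ _ p1S1 q1S1) (neqS _ _ p2S1 q2S1) (etrans wp1 (esym wq1))
  (etrans wp2 (esym wq2)).
case/orP => [/andP [/eqP e1 /eqP e2]|/andP [/eqP e1 _]]; last first.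
  by move: q2S1; rewrite -e1 p1S1.
subst p2 q2.
have wall (d : 'I_M) : d \in D -> w d = w x.
  move=> Dd; have := xmax d Dd; have := ymin d Dd; lra.
have D1 (d : 'I_M) : d \in S1 -> d \notin S2 -> d = p1.
  move=> dS1 dS2; have wd := wall d (inD1 _ dS1 dS2).
  have := huniq (neqS _ _ dS1 q1S1) (neqS _ _ p1S1 q1S1) (etrans wd (esym wq1))
    (etrans wp1 (esym wq1)).
  by case/orP => /andP [/eqP e1 /eqP e2] //; rewrite e1 e2.
have D2 (d : 'I_M) : d \in S2 -> d \notin S1 -> d = q1.
  move=> dS2 dS1; have wd := wall d (inD2 _ dS2 dS1).
  have := huniq (neqS _ _ p1S1 dS1) (neqS _ _ p1S1 q1S1) (etrans wp1 (esym wd))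
    (etrans wp1 (esym wq1)).
  by case/orP => /andP [/eqP e1 /eqP e2] //; rewrite e2 e1.
exists p1, q1; split => //; split; first lra.
apply/setP => z; rewrite !inE.
case: (eqVneq z p1) => [->|zp1] /=.
  by rewrite (negbTE p1S2) andbF.
case: (eqVneq z q1) => [->|zq1] /=.
  by rewrite (negbTE q1S1).
case zS1: (z \in S1); case zS2: (z \in S2) => //.
- by move: zp1; rewrite (D1 z) ?zS2 ?eqxx.
- by move: zq1; rewrite (D2 z) ?zS1 ?eqxx.
Qed.
End Tie.
Section T.
Variable R : realType.
Lemma is_derive_aff (a b x : R) : is_derive x 1 (fun z => a * z + b) a.
Proof.
have -> : (fun z => a * z + b) = (a *: (@id R)) + cst b by apply/funext => z /=.
have := @is_deriveD R R R (a *: id) (cst b) x 1 (a *: (1:R)) 0.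
have -> : a *: (1:R) = a by rewrite -[RHS]mulr1.
rewrite addr0; apply.
have := @is_deriveZ R R R id a x 1 1 (is_derive_id x 1).
by have -> : a *: (1:R) = a by rewrite -[RHS]mulr1.
Qed.
Lemma is_derive_cexp (C a b x : R) :
  is_derive x 1 (fun z => C * expR (a * z + b)) (a * (C * expR (a * x + b))).
Proof.
have e : (fun z => C * expR (a * z + b)) = C *: (expR \o (fun z => a * z + b)) by apply/funext.
rewrite e.
have := @is_derive1_comp R expR (fun z => a * z + b) x _ _ (is_derive_expR _) (is_derive_aff a b x).
move=> H; have := @is_deriveZ R R R _ C x 1 _ H.
have -> : C *: (expR (a * x + b) * a) = a * (C * expR (a * x + b)).
  by rewrite -[LHS]/(C * (expR (a * x + b) * a)); ring.
done.
Qed.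
End T.

Section BigDer.
Variable R : realType.
Lemma is_derive_bigsum (I : Type) (r : seq I) (P : pred I) (F : I -> R -> R)
  (dF : I -> R) (x : R) :
  (forall i, P i -> is_derive x 1 (F i) (dF i)) ->
  is_derive x 1 (fun z => \sum_(i <- r | P i) F i z) (\sum_(i <- r | P i) dF i).
Proof.
move=> H; elim: r => [|i r IH].
  have -> : (fun z => \sum_(i <- [::] | P i) F i z) = cst 0.
    by apply/funext => z; rewrite big_nil.
  by rewrite big_nil; exact: is_derive_cst.
case Pi: (P i).
  have -> : (fun z => \sum_(j <- i :: r | P j) F j z) =
    F i + (fun z => \sum_(j <- r | P j) F j z).
    by apply/funext => z; rewrite big_cons Pi.
  rewrite big_cons Pi; apply: is_deriveD => //; exact: H.
have -> : (fun z => \sum_(j <- i :: r | P j) F j z) = (fun z => \sum_(j <- r | P j) F j z).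
  by apply/funext => z; rewrite big_cons Pi.
by rewrite big_cons Pi.
Qed.
End BigDer.

Section An.
Variables (R : realType) (N M : nat) (k th0 : 'I_M -> R) (A : 'M[R]_(N, M)).
Implicit Types (h : {ffun 'I_N -> 'I_M}).

Definition Kh h := \sum_n k (h n).
Definition Qh h := \sum_n k (h n) ^+ 2.
Definition Eh h (t : R) := \sum_n (k (h n) ^+ 3 * t + th0 (h n)).
Definition Cf h := minor A h * vand k h.

Lemma ThetaE h (x y t : R) : Theta k th0 h x y t = Kh h * x + Qh h * y + Eh h t.
Proof.
rewrite /Theta /phase /Kh /Qh /Eh !mulr_suml -!big_split /=.
by apply: eq_bigr => n _; ring.
Qed.

Lemma termE h (x y t : R) :
  term k th0 A h x y t = Cf h * expR (Kh h * x + (Qh h * y + Eh h t)).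
Proof. by rewrite /term ThetaE /Cf addrA; ring. Qed.

Definition tauI (i : nat) y t x := \sum_(h | incr h) Kh h ^+ i * term k th0 A h x y t.

Lemma tauE (x y t : R) : tau k th0 A x y t = tauI 0 y t x.
Proof. by rewrite /tau /tauI; apply: eq_bigr => h _; rewrite expr0 mul1r. Qed.

Lemma is_derive_tauI (i : nat) (y t x : R) : is_derive x 1 (tauI i y t) (tauI i.+1 y t x).
Proof.
rewrite /tauI.
have -> : (fun z => \sum_(h | incr h) Kh h ^+ i * term k th0 A h z y t) =
  (fun z => \sum_(h | incr h)
     (fun h z => (Kh h ^+ i * Cf h) * expR (Kh h * z + (Qh h * y + Eh h t))) h z).
  by apply/funext => z; apply: eq_bigr => h _; rewrite termE mulrA.
have -> : \sum_(h | incr h) Kh h ^+ i.+1 * term k th0 A h x y t =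
  \sum_(h | incr h) (Kh h * ((Kh h ^+ i * Cf h) * expR (Kh h * x + (Qh h * y + Eh h t)))).
  by apply: eq_bigr => h _; rewrite termE exprS; ring.
apply: is_derive_bigsum => h _; exact: is_derive_cexp.
Qed.

Lemma derive1_tauI (i : nat) (y t x : R) : derive1 (tauI i y t) x = tauI i.+1 y t x.
Proof. by rewrite derive1E (@derive_val _ _ _ _ _ _ _ (is_derive_tauI i y t x)). Qed.
End An.
Section An2.
Variables (R : realType) (N M : nat) (k th0 : 'I_M -> R) (A : 'M[R]_(N, M)).
Hypothesis hk : forall i j : 'I_M, (i < j)%N -> k i < k j.
Hypothesis hpos : forall f : {ffun 'I_N -> 'I_M}, incr f -> minor A f != 0 -> 0 < minor A f.
Variable f0 : {ffun 'I_N -> 'I_M}.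
Hypothesis f0i : incr f0.
Hypothesis f0m : minor A f0 != 0.

Lemma vand_gt0 (h : {ffun 'I_N -> 'I_M}) : incr h -> 0 < vand k h.
Proof.
move=> /forallP hi; apply: prodr_gt0 => r _; apply: prodr_gt0 => s sr.
by rewrite subr_gt0; apply: hk; exact: (implyP (forallP (hi s) r) sr).
Qed.

Lemma term_ge0 (h : {ffun 'I_N -> 'I_M}) (x y t : R) : incr h -> 0 <= term k th0 A h x y t.
Proof.
move=> hi; rewrite /term; apply: mulr_ge0; last exact/ltW/vand_gt0.
apply: mulr_ge0; last exact/ltW/expR_gt0.
by case: (eqVneq (minor A h) 0) => [->//|/(hpos hi)/ltW].
Qed.

Lemma term_gt0 (h : {ffun 'I_N -> 'I_M}) (x y t : R) : incr h -> minor A h != 0 ->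
  0 < term k th0 A h x y t.
Proof.
move=> hi hm; rewrite /term; apply: mulr_gt0; last exact/vand_gt0.
by apply: mulr_gt0; [exact: hpos|exact: expR_gt0].
Qed.

Lemma tau_gt0 (y t x : R) : 0 < tauI k th0 A 0 y t x.
Proof.
rewrite /tauI (bigD1 f0) //=; apply: ltr_pwDl.
  by rewrite expr0 mul1r; exact: term_gt0.
by apply: sumr_ge0 => h /andP [hi _]; rewrite expr0 mul1r; exact: term_ge0.
Qed.

Lemma derive_ln_tau (y t : R) :
  derive1 (fun x' => ln (tau k th0 A x' y t)) =
  (fun x => tauI k th0 A 1 y t x / tauI k th0 A 0 y t x).
Proof.
apply/funext => x.
have -> : (fun x' => ln (tau k th0 A x' y t)) = (@ln R) \o tauI k th0 A 0 y t.
  by apply/funext => z /=; rewrite tauE.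
have H := is_derive1_comp (is_derive1_ln (tau_gt0 y t x)) (is_derive_tauI k th0 A 0 y t x).
by rewrite derive1E (@derive_val _ _ _ _ _ _ _ H) mulrC.
Qed.

Lemma uE (x y t : R) : u k th0 A x y t =
  2 * ((tauI k th0 A 2 y t x * tauI k th0 A 0 y t x - tauI k th0 A 1 y t x ^+ 2)
       / tauI k th0 A 0 y t x ^+ 2).
Proof.
rewrite /u derive_ln_tau.
set t0 := tauI k th0 A 0 y t; set t1 := tauI k th0 A 1 y t.
have -> : (fun x => t1 x / t0 x) = t1 * (fun z => (t0 z)^-1) by apply/funext.
have n0 : t0 x != 0 by apply: lt0r_neq0; exact: tau_gt0.
have H := is_deriveM (is_derive_tauI k th0 A 1 y t x) (is_deriveV n0 (is_derive_tauI k th0 A 0 y t x)).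
rewrite derive1E (@derive_val _ _ _ _ _ _ _ H) /=.
rewrite -/(t0 x) -/(t1 x).
rewrite /GRing.scale /=.
by field.
Qed.
End An2.
Section Lim.
Variable R : realType.

Lemma exp_to0 (l d : R) : l < 0 -> (fun r => expR (r * l + d)) @ +oo --> 0.
Proof.
move=> l0; apply/cvgr0Pnorm_lt => e e0.
have nl : 0 < - l by rewrite oppr_gt0.
near=> r.
rewrite ger0_norm ?expR_ge0 // -[X in _ < X](@lnK R e) ?posrE // ltr_expR.
have : (d - ln e) / (- l) < r by near: r; apply: nbhs_pinfty_gt; rewrite num_real.
rewrite ltr_pdivrMr // => H; lra.
Unshelve. all: by end_near.
Qed.

Lemma cvg_bigsum (I : Type) (r : seq I) (P : pred I) (F : I -> R -> R) (L : I -> R) :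
  (forall i, P i -> F i @ +oo --> L i) ->
  (fun x => \sum_(i <- r | P i) F i x) @ +oo --> \sum_(i <- r | P i) L i.
Proof.
move=> H; elim: r => [|i r IH].
  rewrite big_nil; under eq_fun do rewrite big_nil; exact: cvg_cst.
rewrite big_cons; under eq_fun do rewrite big_cons.
case Pi: (P i) => //; apply: cvgD => //; exact: H.
Qed.

Lemma not_to0 (C l d : R) : C != 0 -> 0 <= l ->
  ~ ((fun r => C * expR (r * l + d)) @ +oo --> 0).
Proof.
move=> C0 l0 H.
have e0 : 0 < `|C| * expR d by rewrite mulr_gt0 ?normr_gt0 ?expR_gt0.
move/cvgr0Pnorm_lt : H => /(_ _ e0) H.
have [r r0 Hr] := pinfty_ex_gt0 H.
move: Hr; rewrite normrM (ger0_norm (expR_ge0 _)) ltr_pM2l ?normr_gt0 //.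
rewrite ltr_expR ltNge lerDr; apply/negP/negPn.
by rewrite mulr_ge0 // ltW.
Qed.
End Lim.
Section Aff.
Variable R : realType.

Lemma eps_ex (P L : R) : 0 < P -> exists e : R, [/\ 0 < e, e < 1 & 0 < P - e * `|L|].
Proof.
move=> P0.
have nL : 0 <= `|L| := normr_ge0 L.
have D0 : 0 < 2 * P + `|L| by rewrite ltr_wpDr // mulr_gt0.
exists (P / (2 * P + `|L|)); split.
- by rewrite divr_gt0.
- by rewrite ltr_pdivrMr // mul1r; lra.
- have -> : P - P / (2 * P + `|L|) * `|L| = P * (2 * P) / (2 * P + `|L|).
    field; exact: lt0r_neq0.
  by rewrite divr_gt0 // !mulr_gt0.
Qed.

Lemma aff_left (al be a c0 : R) : a < c0 ->
  (forall c, a < c -> c < c0 -> al * c + be < 0) -> al * c0 + be <= 0.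
Proof.
move=> ac H; rewrite leNgt; apply/negP => P0.
have [e [e0 e1 He]] := eps_ex (al * (c0 - a)) P0.
have := H (c0 - e * (c0 - a)).
have : al * (c0 - a) <= `|al * (c0 - a)| := ler_norm _.
have : 0 < c0 - a by rewrite subr_gt0.
move=> ca hn H'.
have h1 : a < c0 - e * (c0 - a) by nra.
have h2 : c0 - e * (c0 - a) < c0 by nra.
have := H' h1 h2; nra.
Qed.

Lemma aff_right (al be c0 b : R) : c0 < b ->
  (forall c, c0 < c -> c < b -> al * c + be < 0) -> al * c0 + be <= 0.
Proof.
move=> cb H; rewrite leNgt; apply/negP => P0.
have [e [e0 e1 He]] := eps_ex (al * (b - c0)) P0.
have := H (c0 + e * (b - c0)).
have : - (al * (b - c0)) <= `|al * (b - c0)| by rewrite -normrN ler_norm.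
have : 0 < b - c0 by rewrite subr_gt0.
move=> ca hn H'.
have h1 : c0 < c0 + e * (b - c0) by nra.
have h2 : c0 + e * (b - c0) < b by nra.
have := H' h1 h2; nra.
Qed.
End Aff.
Section Asym.
Variables (R : realType) (N M : nat) (k th0 : 'I_M -> R) (A : 'M[R]_(N, M)).
Hypothesis hk : forall i j : 'I_M, (i < j)%N -> k i < k j.
Hypothesis hpos : forall f : {ffun 'I_N -> 'I_M}, incr f -> minor A f != 0 -> 0 < minor A f.
Variables (t sg d s : R) (f g : {ffun 'I_N -> 'I_M}).
Hypotheses (fi : incr f) (gi : incr g) (fm : minor A f != 0) (gm : minor A g != 0).
Hypothesis fg : f != g.
Implicit Types (h : {ffun 'I_N -> 'I_M}) (r : R).
Definition Wt h := sg * (- d * Kh k h + Qh k h).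
Hypothesis hW : Wt g = Wt f.
Hypothesis hlt : forall h, incr h -> minor A h != 0 -> h != f -> h != g -> Wt h < Wt f.

Definition X (r : R) := s - d * (sg * r).
Definition Tm h r := term k th0 A h (X r) (sg * r) t.
Definition Dh h := Kh k h * s + Eh k th0 h t.

Lemma TmE h r : Tm h r = Cf k A h * expR (r * Wt h + Dh h).
Proof. rewrite /Tm termE /Wt /Dh /X; congr (_ * expR _); ring. Qed.

Lemma Cf_gt0 h : incr h -> minor A h != 0 -> 0 < Cf k A h.
Proof. by move=> hi hm; rewrite /Cf mulr_gt0 ?hpos // (vand_gt0 hk). Qed.

Lemma Tmf_gt0 r : 0 < Tm f r.
Proof. exact: (term_gt0 th0 hk hpos (X r) (sg * r) t fi fm). Qed.

Lemma ratioE h r : Tm h r / Tm f r =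
  (Cf k A h / Cf k A f) * expR (r * (Wt h - Wt f) + (Dh h - Dh f)).
Proof.
rewrite !TmE.
have e : expR (r * Wt h + Dh h) =
  expR (r * (Wt h - Wt f) + (Dh h - Dh f)) * expR (r * Wt f + Dh f).
  by rewrite -expRD; congr expR; ring.
rewrite e; field.
by rewrite (lt0r_neq0 (Cf_gt0 fi fm)) (lt0r_neq0 (expR_gt0 _)).
Qed.

Definition G := Cf k A g / Cf k A f * expR (Dh g - Dh f).

Lemma G_gt0 : 0 < G.
Proof. by rewrite /G mulr_gt0 ?expR_gt0 // divr_gt0 // Cf_gt0. Qed.

Lemma ratio_g r : Tm g r / Tm f r = G.
Proof. by rewrite ratioE hW subrr mulr0 add0r. Qed.

Definition limh h : R := if h == f then 1 else if h == g then G else 0.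

Lemma ratio_lim h : incr h -> (fun r => Tm h r / Tm f r) @ +oo --> limh h.
Proof.
move=> hi; rewrite /limh.
case: (eqVneq h f) => [->|hf].
  under eq_fun do rewrite divff ?(lt0r_neq0 (Tmf_gt0 _)) //.
  exact: cvg_cst.
case: (eqVneq h g) => [->|hg].
  under eq_fun do rewrite ratio_g.
  exact: cvg_cst.
case: (eqVneq (minor A h) 0) => [h0|hm].
  under eq_fun do rewrite ratioE /Cf h0 !mul0r.
  exact: cvg_cst.
under eq_fun do rewrite ratioE.
have := cvgM (cvg_cst (Cf k A h / Cf k A f)) (exp_to0 (Dh h - Dh f) _).
rewrite mulr0; apply; rewrite subr_lt0; exact: hlt.
Qed.

Definition rho i r := tauI k th0 A i (sg * r) t (X r) / Tm f r.

Lemma rhoE i r : rho i r = \sum_(h | incr h) Kh k h ^+ i * (Tm h r / Tm f r).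
Proof. by rewrite /rho /tauI mulr_suml; apply: eq_bigr => h _; rewrite mulrA. Qed.

Definition Li i := Kh k f ^+ i + Kh k g ^+ i * G.

Lemma rho_lim i : rho i @ +oo --> Li i.
Proof.
have gf : g != f by rewrite eq_sym.
have -> : Li i = \sum_(h | incr h) Kh k h ^+ i * limh h.
  rewrite (bigD1 f) //= (bigD1 g) /=; last by rewrite gi gf.
  rewrite big1 ?addr0.
    by rewrite /limh eqxx (negbTE gf) eqxx mulr1 /Li.
  move=> h /andP [/andP [_ hf] hg]; rewrite /limh (negbTE hf) (negbTE hg) mulr0 //.
have -> : rho i = (fun r => \sum_(h | incr h) Kh k h ^+ i * (Tm h r / Tm f r)).
  by apply/funext => r; rewrite rhoE.
apply: cvg_bigsum => h hi.
have := cvgM (cvg_cst (Kh k h ^+ i)) (ratio_lim hi); apply.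
Qed.

Lemma tau_lim : (fun r => tau k th0 A (X r) (sg * r) t / (Tm f r + Tm g r) - 1)
  @ +oo --> 0.
Proof.
have G1 : 1 + G != 0 by rewrite lt0r_neq0 // addr_gt0 // G_gt0.
have -> : (fun r => tau k th0 A (X r) (sg * r) t / (Tm f r + Tm g r) - 1) =
          (fun r => rho 0 r / (1 + G) - 1).
  apply/funext => r; congr (_ - _).
  have tf := lt0r_neq0 (Tmf_gt0 r).
  rewrite -(ratio_g r) /rho tauE.
  field; rewrite tf /= lt0r_neq0 // addr_gt0 ?Tmf_gt0 //.
  exact: (term_gt0 th0 hk hpos (X r) (sg * r) t gi gm).
have : Li 0 / (1 + G) - 1 = 0 by rewrite /Li !expr0 mul1r divff // subrr.
move=> <-.
apply: cvgB; last exact: cvg_cst.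
have := cvgM (rho_lim (i:=0)) (cvg_cst (1 + G)^-1); apply.
Qed.

Lemma u_lim : (fun r => u k th0 A (X r) (sg * r) t) @ +oo -->
  2 * ((Li 2 * Li 0 - Li 1 ^+ 2) / Li 0 ^+ 2).
Proof.
have L0 : Li 0 != 0 by rewrite /Li !expr0 mul1r lt0r_neq0 // addr_gt0 // G_gt0.
have -> : (fun r => u k th0 A (X r) (sg * r) t) =
  (fun r => 2 * ((rho 2 r * rho 0 r - rho 1 r * rho 1 r) * (rho 0 r * rho 0 r)^-1)).
  apply/funext => r; rewrite (uE th0 hk hpos fi fm) /rho.
  have tf := lt0r_neq0 (Tmf_gt0 r).
  have t0 := lt0r_neq0 (tau_gt0 th0 hk hpos fi fm (sg * r) t (X r)).
  by field; rewrite tf t0.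
have -> : 2 * ((Li 2 * Li 0 - Li 1 ^+ 2) / Li 0 ^+ 2) =
  2 * ((Li 2 * Li 0 - Li 1 * Li 1) * (Li 0 * Li 0)^-1) by rewrite !expr2.
have Hn : (fun r => rho 2 r * rho 0 r - rho 1 r * rho 1 r) @ +oo --> Li 2 * Li 0 - Li 1 * Li 1.
  by apply: cvgB; apply: cvgM; apply: rho_lim.
have Hd : (fun r => (rho 0 r * rho 0 r)^-1) @ +oo --> (Li 0 * Li 0)^-1.
  by apply: cvgV; [exact: mulf_neq0|apply: cvgM; apply: rho_lim].
apply: cvgM; first exact: cvg_cst.
exact: cvgM.
Qed.
End Asym.
Section Help.
Variables (R : realType) (N M : nat) (k th0 : 'I_M -> R) (A : 'M[R]_(N, M)).

Lemma sum_phases (F : 'I_M -> R) (h : {ffun 'I_N -> 'I_M}) : incr h ->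
  \sum_n F (h n) = \sum_(m in phases h) F m.
Proof.
move=> hi; rewrite /phases big_imset /=; last by move=> x y _ _; apply: incr_inj.
by [].
Qed.

Lemma sum_swap (F : 'I_M -> R) (f g : {ffun 'I_N -> 'I_M}) p q :
  incr f -> incr g -> p \in phases f -> q \in phases g ->
  phases f :\ p = phases g :\ q ->
  \sum_n F (f n) - \sum_n F (g n) = F p - F q.
Proof.
move=> fi gi pf qg e.
rewrite !sum_phases // (big_setD1 p pf) (big_setD1 q qg) /= e; ring.
Qed.

Lemma ray_ratio (h f : {ffun 'I_N -> 'I_M}) (c sg r t : R) : Cf k A f != 0 ->
  term k th0 A h (c * (sg * r)) (sg * r) t / term k th0 A f (c * (sg * r)) (sg * r) t =
  (Cf k A h / Cf k A f) *
    expR (r * (sg * (c * Kh k h + Qh k h) - sg * (c * Kh k f + Qh k f)) + (Eh k th0 h t - Eh k th0 f t)).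
Proof.
move=> Cf0; rewrite !termE.
set eh := Kh k h * _ + _; set ef := Kh k f * _ + _.
have e : expR eh = expR (r * (sg * (c * Kh k h + Qh k h) - sg * (c * Kh k f + Qh k f)) +
    (Eh k th0 h t - Eh k th0 f t)) * expR ef.
  by rewrite -expRD /eh /ef; congr expR; ring.
rewrite e; field.
by rewrite Cf0 (lt0r_neq0 (expR_gt0 _)).
Qed.
End Help.
Section Sol.
Variables (R : realType) (N M : nat) (k th0 : 'I_M -> R) (A : 'M[R]_(N, M)).
Hypothesis hk : forall i j : 'I_M, (i < j)%N -> k i < k j.
Hypothesis hpos : forall f : {ffun 'I_N -> 'I_M}, incr f -> minor A f != 0 -> 0 < minor A f.

Lemma sech2E (z : R) : sech (z / 2) ^+ 2 = 4 * expR z / (expR z + 1) ^+ 2.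
Proof.
rewrite /sech.
have E0 : 0 < expR (z / 2) := expR_gt0 _.
have ez : expR z = expR (z / 2) * expR (z / 2) by rewrite -expRD; congr expR; field.
rewrite ez expRN.
have e0 := lt0r_neq0 E0.
have e1 : expR (z / 2) * expR (z / 2) + 1 != 0 by rewrite lt0r_neq0 // addr_gt0 // mulr_gt0.
have e2 : expR (z / 2) + (expR (z / 2))^-1 != 0 by rewrite lt0r_neq0 // addr_gt0 // invr_gt0.
by field; rewrite e0 e1.
Qed.

Lemma sol_eq (f g : {ffun 'I_N -> 'I_M}) (p q : 'I_M) :
  incr f -> incr g -> minor A f != 0 -> minor A g != 0 ->
  p \in phases f -> q \in phases g -> phases f :\ p = phases g :\ q ->
  forall x y t : R,
  2^-1 * (k p - k q) ^+ 2 *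
    (sech ((phase k th0 p x y t - phase k th0 q x y t
            + ln ((minor A f * vand k f) / (minor A g * vand k g))) / 2)) ^+ 2 =
  2 * (((Kh k f ^+ 2 + Kh k g ^+ 2 * (term k th0 A g x y t / term k th0 A f x y t)) *
        (Kh k f ^+ 0 + Kh k g ^+ 0 * (term k th0 A g x y t / term k th0 A f x y t)) -
        (Kh k f ^+ 1 + Kh k g ^+ 1 * (term k th0 A g x y t / term k th0 A f x y t)) ^+ 2) /
       (Kh k f ^+ 0 + Kh k g ^+ 0 * (term k th0 A g x y t / term k th0 A f x y t)) ^+ 2).
Proof.
move=> fi gi fm gm pSf qSg eS x y t.
have vf := vand_gt0 hk fi; have vg := vand_gt0 hk gi.
have mf := hpos fi fm; have mg := hpos gi gm.
have dK : Kh k f - Kh k g = k p - k q by rewrite /Kh (sum_swap k fi gi pSf qSg eS).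
have dT : Theta k th0 f x y t - Theta k th0 g x y t =
    phase k th0 p x y t - phase k th0 q x y t.
  by rewrite /Theta (sum_swap (fun m => phase k th0 m x y t) fi gi pSf qSg eS).
set z := _ + ln _.
have ez : expR z = term k th0 A f x y t / term k th0 A g x y t.
  rewrite /z expRD lnK ?posrE; last by rewrite divr_gt0 // mulr_gt0.
  rewrite /term -dT.
  have -> : expR (Theta k th0 f x y t) =
    expR (Theta k th0 f x y t - Theta k th0 g x y t) * expR (Theta k th0 g x y t).
    by rewrite -expRD subrK.
  field.
  by rewrite !lt0r_neq0 ?expR_gt0.
rewrite sech2E ez.
have Tf : 0 < term k th0 A f x y t by exact: term_gt0.
have Tg : 0 < term k th0 A g x y t by exact: term_gt0.
have -> : Kh k f = Kh k g + (k p - k q) by rewrite -dK; ring.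
rewrite !expr0 !expr1 !mul1r.
field.
by rewrite !lt0r_neq0 ?addr_gt0.
Qed.
End Sol.
Unset Implicit Arguments.
Theorem proposition1 (R : realType) (N M : nat) (k th0 : 'I_M -> R)
    (A : 'M[R]_(N, M)) :
  (1 <= N)%N -> (N < M)%N ->
  (forall i j : 'I_M, (i < j)%N -> k i < k j) ->
  generic k ->
  \rank A = N ->
  (forall f : {ffun 'I_N -> 'I_M}, incr f -> minor A f != 0 -> 0 < minor A f) ->
  forall (t sg : R), (sg = 1 \/ sg = -1) ->
  forall (a c0 b : R) (f g : {ffun 'I_N -> 'I_M}),
    a < c0 -> c0 < b ->
    (forall c, a < c -> c < c0 -> dominant k th0 A t sg c f) ->
    (forall c, c0 < c -> c < b -> dominant k th0 A t sg c g) ->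
    f != g ->
    exists i j : 'I_M,
      [/\ i \in phases f, j \in phases g, i != j,
          phases f :\ i = phases g :\ j
        & [/\ (* transition along the line L_ij : theta_i = theta_j,
                 i.e. x = -(k_i + k_j) y + const *)
              c0 = - (k i + k j),
              (* tau ~ C_i e^{theta(i,..)} + C_j e^{theta(j,..)} along L_ij *)
              (forall s : R,
                 ((tau k th0 A (s - (k i + k j) * (sg * r)) (sg * r) t /
                  (term k th0 A f (s - (k i + k j) * (sg * r)) (sg * r) t
                   + term k th0 A g (s - (k i + k j) * (sg * r)) (sg * r) t)) - 1)
                 @[r --> +oo] --> 0),
              (* u ~ 1/2 (k_i - k_j)^2 sech^2 [ (theta_i - theta_j)/2 + const ] *)
              (forall s : R,
                 (u k th0 A (s - (k i + k j) * (sg * r)) (sg * r) t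
                  - 2^-1 * (k i - k j) ^+ 2 *
                    (sech ((phase k th0 i (s - (k i + k j) * (sg * r)) (sg * r) t
                            - phase k th0 j (s - (k i + k j) * (sg * r)) (sg * r) t
                            + ln ((minor A f * vand k f) / (minor A g * vand k g)))
                           / 2)) ^+ 2)
                 @[r --> +oo] --> 0)
            & (* dispersion relation -4 w l_x + l_x^4 + 3 l_y^2 = 0 *)
              - 4 * (k i ^+ 3 - k j ^+ 3) * (k i - k j) + (k i - k j) ^+ 4
                + 3 * (k i ^+ 2 - k j ^+ 2) ^+ 2 = 0]].
Proof.
move=> N1 NM hk hgen hrank hpos t sg hsg a c0 b f g ac0 c0b domf domg fg.
have sg0 : sg != 0 by case: hsg => ->; rewrite ?oppr_eq0 oner_eq0.
have [fi fm _] := domf ((a + c0) / 2) ltac:(lra) ltac:(lra).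
have [gi gm _] := domg ((c0 + b) / 2) ltac:(lra) ltac:(lra).
have Cfn (h : {ffun 'I_N -> 'I_M}) : incr h -> minor A h != 0 -> Cf k A h != 0.
  by move=> hi hm; rewrite /Cf mulf_neq0 // lt0r_neq0 // (vand_gt0 hk).
pose w m := sg * (c0 * k m + k m ^+ 2).
have Wph (h : {ffun 'I_N -> 'I_M}) : incr h ->
    sg * (c0 * Kh k h + Qh k h) = W w (phases h).
  move=> hi; rewrite /W -sum_phases // /w /Kh /Qh -mulr_sumr big_split /=.
  by rewrite -mulr_sumr.
have key (e h : {ffun 'I_N -> 'I_M}) c : incr e -> minor A e != 0 -> incr h ->
    minor A h != 0 -> h != e -> dominant k th0 A t sg c e ->
    sg * (c * Kh k h + Qh k h) < sg * (c * Kh k e + Qh k e).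
  move=> ei em hi hm he [_ _ Hd].
  have := Hd h hi he.
  have E : (fun r => term k th0 A h (c * (sg * r)) (sg * r) t /
                     term k th0 A e (c * (sg * r)) (sg * r) t) =
    (fun r => (Cf k A h / Cf k A e) *
      expR (r * (sg * (c * Kh k h + Qh k h) - sg * (c * Kh k e + Qh k e)) +
            (Eh k th0 h t - Eh k th0 e t))).
    by apply/funext => r; rewrite ray_ratio // Cfn.
  rewrite E; rewrite ltNge => H; apply/negP => le.
  apply: (not_to0 _ _ H); first by rewrite mulf_neq0 ?invr_neq0 ?Cfn.
  by rewrite subr_ge0.
have lef (h : {ffun 'I_N -> 'I_M}) : incr h -> minor A h != 0 -> h != f ->
    W w (phases h) <= W w (phases f).
  move=> hi hm hf; rewrite -!Wph // -subr_le0.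
  have -> : sg * (c0 * Kh k h + Qh k h) - sg * (c0 * Kh k f + Qh k f) =
    (sg * (Kh k h - Kh k f)) * c0 + sg * (Qh k h - Qh k f) by ring.
  apply: (aff_left ac0) => c ac cc0.
  have := key f h c fi fm hi hm hf (domf c ac cc0).
  rewrite -subr_lt0.
  have -> : sg * (c * Kh k h + Qh k h) - sg * (c * Kh k f + Qh k f) =
    (sg * (Kh k h - Kh k f)) * c + sg * (Qh k h - Qh k f) by ring.
  by [].
have leg (h : {ffun 'I_N -> 'I_M}) : incr h -> minor A h != 0 -> h != g ->
    W w (phases h) <= W w (phases g).
  move=> hi hm hg; rewrite -!Wph // -subr_le0.
  have -> : sg * (c0 * Kh k h + Qh k h) - sg * (c0 * Kh k g + Qh k g) =
    (sg * (Kh k h - Kh k g)) * c0 + sg * (Qh k h - Qh k g) by ring.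
  apply: (aff_right c0b) => c cc0 cb.
  have := key g h c gi gm hi hm hg (domg c cc0 cb).
  rewrite -subr_lt0.
  have -> : sg * (c * Kh k h + Qh k h) - sg * (c * Kh k g + Qh k g) =
    (sg * (Kh k h - Kh k g)) * c + sg * (Qh k h - Qh k g) by ring.
  by [].
have gf : g != f by rewrite eq_sym.
have eqW : W w (phases f) = W w (phases g).
  by apply/eqP; rewrite eq_le leg // lef.
have Wmax T : isB A T -> W w T <= W w (phases f).
  move=> [h [hi <- hm]]; case: (eqVneq h f) => [->//|hf]; exact: lef.
have tie2 (x y : 'I_M) : x != y -> w x = w y -> k x + k y = - c0.
  move=> xy wxy.
  have kxy : k x != k y.
    case: (ltngtP x y) => [lt|gt|eq].
    - by rewrite lt_eqF // hk.
    - by rewrite gt_eqF // hk.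
    - by move: xy; rewrite (val_inj eq) eqxx.
  have : sg * ((k x - k y) * (c0 + k x + k y)) = w x - w y by rewrite /w; ring.
  rewrite wxy subrr => /eqP; rewrite !mulf_eq0 (negbTE sg0) subr_eq0 (negbTE kxy) /=.
  move=> /eqP H; lra.
have huniq (x y p q : 'I_M) : x != y -> p != q -> w x = w y -> w p = w q ->
    (x == p) && (y == q) || (x == q) && (y == p).
  move=> xy pq wxy wpq; apply: hgen => //.
  by rewrite (tie2 _ _ xy wxy) (tie2 _ _ pq wpq).
have hSE1 := @SE1 _ _ _ A.
have hSE2 := @SE2 _ _ _ A.
have Bf : isB A (phases f) by exists f.
have Bg : isB A (phases g) by exists g.
have neqS : phases f != phases g.
  by apply/eqP => e; move: fg; rewrite (incr_phases_inj fi gi e) eqxx.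
have [p [q [pSf pSg qSg qSf [wpq eSet]]]] :=
  tie hSE1 hSE2 huniq Bf Bg neqS eqW Wmax.
have pq : p != q by apply: contraNneq qSf => <-.
have c0E : c0 = - (k p + k q) by rewrite (tie2 _ _ pq wpq) opprK.
set d := k p + k q.
have WtE (h : {ffun 'I_N -> 'I_M}) : incr h -> Wt k sg d h = W w (phases h).
  by move=> hi; rewrite -Wph // c0E.
have hW : Wt k sg d g = Wt k sg d f by rewrite !WtE // eqW.
have hlt (h : {ffun 'I_N -> 'I_M}) : incr h -> minor A h != 0 -> h != f -> h != g ->
    Wt k sg d h < Wt k sg d f.
  move=> hi hm hf hg; rewrite !WtE // lt_neqAle lef // andbT.
  apply/negP => /eqP eqh.
  have Bh : isB A (phases h) by exists h.
  have neq' : phases f != phases h.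
    by apply/eqP => e; move: hf; rewrite (incr_phases_inj fi hi e) eqxx.
  have [p' [q' [p'Sf p'Sh q'Sh q'Sf [wpq' eSet']]]] :=
    tie hSE1 hSE2 huniq Bf Bh neq' (esym eqh) Wmax.
  have pq' : p' != q' by apply: contraNneq q'Sf => <-.
  case/orP: (huniq p' q' p q pq' pq wpq' wpq) => /andP [/eqP e1 /eqP e2].
    subst p' q'.
    have e : phases h = phases g.
      by rewrite -(finset.setD1K q'Sh) -eSet' eSet finset.setD1K.
    by move: hg; rewrite (incr_phases_inj hi gi e) eqxx.
  by move: qSf; rewrite -e1 p'Sf.
exists p, q; split => //; split => //.
- by move=> s; apply: (tau_lim th0 hk hpos t s fi gi fm gm fg hW hlt).
- move=> s.
  have L := @u_lim _ _ _ k th0 A hk hpos t sg d s f g fi gi fm gm fg hW hlt.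
  have rg r : term k th0 A g (s - d * (sg * r)) (sg * r) t /
              term k th0 A f (s - d * (sg * r)) (sg * r) t = G k th0 A t s f g :=
    ratio_g th0 hk hpos t s fi fm hW r.
  under eq_fun => r do rewrite (sol_eq th0 hk hpos fi gi fm gm pSf qSg eSet) rg.
  set C := 2 * ((Li k th0 A t s f g 2 * Li k th0 A t s f g 0 -
     Li k th0 A t s f g 1 ^+ 2) / Li k th0 A t s f g 0 ^+ 2).
  have := cvgB L (cvg_cst C); rewrite subrr => H; apply: H.
- ring.
Qed.
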